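(* Let $M_t\ge 1$, $\nu\ge 0$, $d\in\{1,\dots,M_t\}$ be integers and set $R=M_t-d+1$. If $T\ge (2^R-1)\nu+(2^R-1)(\nu+1)\big((M_t-2)(2^R-1)+R\big)$, then there exists a set $\mathcal{P}_{\nu,d}$ of binary matrices $\mathbf{B}\in\mathbb{F}_2^{M_t\times T}$, each having its last $\nu$ columns equal to zero, such that (1) for every pair of distinct $\mathbf{A},\mathbf{B}\in\mathcal{P}_{\nu,d}$, $\operatorname{rank}_{\mathbb{F}_2}\big(\Theta(\mathbf{A})-\Theta(\mathbf{B})\big)\ge d(\nu+1)$, and (2) $\log_2|\mathcal{P}_{\nu,d}|\ge R\big(T-\nu-(\nu+1)(M_t-1)(2^R-1)2^{R-1}\big)$.
   Context: For $\mathbf{B}=[\mathbf{c}[0],\dots,\mathbf{c}[T-\nu-1],\mathbf{0},\dots,\mathbf{0}]\in\mathbb{F}_2^{M_t\times T}$ (last $\nu$ columns zero), $\Theta(\mathbf{B})\in\mathbb{F}_2^{(\nu+1)M_t\times T}$ is the block-Toeplitz matrix with $\nu+1$ block rows, block row $i$ ($i=0,\dots,\nu$) being $\mathbf{B}$ with its columns shifted right by $i$ positions, i.e. $[\mathbf{0},\dots,\mathbf{0},\mathbf{c}[0],\dots,\mathbf{c}[T-\nu-1],\mathbf{0},\dots,\mathbf{0}]$ with $i$ leading and $\nu-i$ trailing zero columns. *)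

(* Defs.v *)
From HB Require Import structures.
From mathcomp Require Import all_boot all_order all_algebra.
Set Implicit Arguments. Unset Strict Implicit. Unset Printing Implicit Defensive.
Import GRing.Theory.
Local Open Scope ring_scope.

Notation bmx Mt T := 'M['F_2]_(Mt, T).

(* B with its columns shifted right by i positions (columns shifted past
   position T-1 are dropped; for the matrices considered these are zero). *)
Definition shift_mx (Mt T i : nat) (B : bmx Mt T) : bmx Mt T :=
  \matrix_(r < Mt, c < T) (if (i <= c)%N then B r (insubd c (c - i)%N) else 0).

(* Theta(B): block-Toeplitz matrix with nu+1 block rows, block row i being
   B shifted right by i. Its row count is \sum_(i < nu.+1) Mt = (nu+1) Mt. *)
Definition Theta (Mt T nu : nat) (B : bmx Mt T) :
  'M['F_2]_(\sum_(i < nu.+1) Mt, T) :=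
  \mxcol_(i < nu.+1) shift_mx i B.

Definition last_cols_zero (Mt T nu : nat) (B : bmx Mt T) : Prop :=
  forall (r : 'I_Mt) (c : 'I_T), (T - nu <= c)%N -> B r c = 0.

(* Main.v *)
From HB Require Import structures.
From mathcomp Require Import all_boot all_order all_algebra zify.
Require Import Defs.
Set Implicit Arguments. Unset Strict Implicit. Unset Printing Implicit Defensive.
Import GRing.Theory Num.Theory.
Local Open Scope ring_scope.

Lemma rank_lb (F : fieldType) m n (M : 'M[F]_(m,n)) (I : finType)
  (g : I -> 'I_m) (w : I -> 'I_n) :
  injective w -> (forall i, M (g i) (w i) != 0) ->
  (forall i (c : 'I_n), (c < w i)%N -> M (g i) c = 0) -> (#|I| <= \rank M)%N.
Proof.
move=> wi nz z.
set N := rowsub (fun j : 'I_#|I| => g (enum_val j)) M.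
apply: (leq_trans _ (mxrankS (rowsub_sub (fun j : 'I_#|I| => g (enum_val j)) M))).
rewrite -/N.
suff: row_free N by rewrite /row_free => /eqP ->.
rewrite -kermx_eq0; apply/eqP/row_matrixP => k; rewrite row0.
have: (row k (kermx N) *m N = 0) by apply/sub_kermxP; exact: row_sub.
move: (row k (kermx N)) => u uN.
apply/rowP => j0; rewrite mxE; apply/eqP/negPn/negP => nzj0.
pose j1 := [arg min_(j < j0 | u 0 j != 0) (w (enum_val j) : nat)].
have [j uj jmin] : extremum_spec leq (fun j => u 0 j != 0) (fun j => (w (enum_val j) : nat)) j1.
  exact: arg_minnP.
move/matrixP: uN => /(_ 0 (w (enum_val j))); rewrite !mxE (bigD1 j) //= big1 ?addr0.
  by rewrite mxE; apply/eqP; rewrite mulf_neq0.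
move=> j' nj'; rewrite mxE.
have [->|uj'] := eqVneq (u 0 j') 0; first by rewrite mul0r.
rewrite z ?mulr0 //.
have := jmin _ uj'; rewrite leq_eqVlt => /orP[/eqP e|//].
by move/val_inj/wi/enum_val_inj: e => e; rewrite e eqxx in nj'.
Qed.

Lemma ThetaB Mt T nu (A B : bmx Mt T) : Theta nu A - Theta nu B = Theta nu (A - B).
Proof. by apply/matrixP => s c; rewrite !mxE; case: ifP => _; rewrite ?mxE ?subr0. Qed.

Lemma ThetaE Mt T nu (B : bmx Mt T) (i : 'I_nu.+1) (r : 'I_Mt) c :
  Theta nu B (@tagnat.Rank nu.+1 (fun _ => Mt) i r) c = shift_mx i B r c.
Proof.
have := mxcolK (fun i : 'I_nu.+1 => shift_mx i B) i.
by move/matrixP/(_ r c); rewrite mxE.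
Qed.

Section Code.
Variables (Mt nu T R K : nat).
Local Notation F := 'F_2.
Definition ee (r k : nat) := (r * nu.+1 * k.+1)%N.
Definition cf (U : 'M[F]_(R,K)) (k : 'I_R) (n : nat) : F :=
  \sum_(j < K) (if n == j then U k j else 0).
Definition enc (U : 'M[F]_(R,K)) : 'M[F]_(Mt,T) :=
  \matrix_(r < Mt, c < T) \sum_(k < R) (if (ee r k <= c)%N then cf U k (c - ee r k) else 0).

Lemma cf_out U k n : (K <= n)%N -> cf U k n = 0.
Proof.
move=> hn; apply: big1 => j _; case: eqP => // en.
by move: (ltn_ord j); rewrite -en ltnNge hn.
Qed.

Lemma cf_in U k (j : 'I_K) : cf U k j = U k j.
Proof.
rewrite /cf (bigD1 j) //= eqxx big1 ?addr0 // => j' nj.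
by case: eqP => // /val_inj e; rewrite e eqxx in nj.
Qed.

Lemma cfB U V k n : cf (U - V) k n = cf U k n - cf V k n.
Proof.
rewrite /cf -sumrB; apply: eq_bigr => j _; rewrite !mxE.
by case: ifP => _; rewrite ?subr0.
Qed.

Lemma encB U V : enc (U - V) = enc U - enc V.
Proof.
apply/matrixP => r c; rewrite !mxE -sumrB; apply: eq_bigr => k _.
by case: ifP => _; rewrite ?cfB ?subr0.
Qed.

Hypothesis HK : K = (T - nu - Mt.-1 * nu.+1 * R)%N.

Lemma enc_last U : last_cols_zero nu (enc U).
Proof.
move=> r c hc; rewrite mxE; apply: big1 => k _; case: ifP => // h.
apply: cf_out.
have : (ee r k <= Mt.-1 * nu.+1 * R)%N.
  rewrite /ee; apply: leq_mul; first apply: leq_mul => //.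
    by have := ltn_ord r; lia.
  exact: ltn_ord.
rewrite HK; lia.
Qed.

Lemma ee_le (r : 'I_Mt) (k : 'I_R) : (ee r k <= Mt.-1 * nu.+1 * R)%N.
Proof.
rewrite /ee; apply: leq_mul; first apply: leq_mul => //.
  by have := ltn_ord r; lia.
exact: ltn_ord.
Qed.

Lemma main U : U != 0 -> (1 <= R)%N ->
  ((Mt - R.-1) * nu.+1 <= \rank (Theta nu (enc U)))%N.
Proof.
move=> U0 R1.
set S := [set k : 'I_R | [exists j, U k j != 0]].
have cfS : forall k n, k \notin S -> cf U k n = 0.
  move=> k n; rewrite inE negb_exists => /forallP h; apply: big1 => j _.
  by case: ifP => // _; move: (h j) => /negPn/eqP.
have [vv hv] : exists vv : 'I_R -> nat, forall k,
    (forall m, (m < vv k)%N -> cf U k m = 0) /\ (k \in S -> cf U k (vv k) != 0).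
  apply: (@fin_all_exists _ (fun _ => nat) (fun k n =>
    (forall m, (m < n)%N -> cf U k m = 0) /\ (k \in S -> cf U k n != 0))) => k.
  case kS: (k \in S); last by exists 0%N; split => // m; rewrite ltn0.
  have ex : exists n, cf U k n != 0.
    by move: kS; rewrite inE => /existsP [j hj]; exists j; rewrite cf_in.
  case: (ex_minnP ex) => n hn hmin; exists n; split => // m hm.
  by apply/eqP/negPn/negP => h; have := hmin _ h; rewrite leqNgt hm.
have vK : forall k, k \in S -> (vv k < K)%N.
  move=> k kS; rewrite ltnNge; apply/negP => h; have := (hv k).2 kS.
  by rewrite cf_out.
have [k0 k0S] : exists k0, k0 \in S.
  case: (set_0Vmem S) => [S0|[k0 k0S]]; last by exists k0.
  exfalso; apply: (negP U0); apply/eqP/matrixP => k j; rewrite mxE.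
  apply/eqP/negPn/negP => h.
  have : k \in S by rewrite inE; apply/existsP; exists j.
  by rewrite S0 inE.
pose a := fun (r : 'I_Mt) (k : 'I_R) => (ee r k + vv k)%N.
pose am := fun r => [arg min_(k < k0 in S) a r k].
have amP : forall r, am r \in S /\ forall k, k \in S -> (a r (am r) <= a r k)%N.
  by move=> r; rewrite /am; case: (arg_minnP (a r) k0S) => k kS h; split.
pose Ms := fun r k => (k \in S) && (a r k == a r (am r)).
have Msam : forall r, Ms r (am r).
  by move=> r; rewrite /Ms eqxx andbT; case: (amP r).
pose lo := fun r => [arg min_(k < am r | Ms r k) (k : nat)].
pose hi := fun r => [arg max_(k > am r | Ms r k) (k : nat)].
have loP : forall r, Ms r (lo r) /\ forall k, Ms r k -> (lo r <= k)%N.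
  by move=> r; rewrite /lo; case: (arg_minnP (fun k : 'I_R => k : nat) (Msam r)) => k hk h; split.
have hiP : forall r, Ms r (hi r) /\ forall k, Ms r k -> (k <= hi r)%N.
  by move=> r; rewrite /hi; case: (arg_maxnP (fun k : 'I_R => k : nat) (Msam r)) => k hk h; split.
have slope : forall (r r' : 'I_Mt) k, (r < r')%N ->
    (a r k + (r' - r) * nu.+1 * k.+1 = a r' k)%N.
  move=> r r' k rr'; rewrite /a /ee.
  have -> : (r' : nat) = (r + (r' - r))%N by lia.
  rewrite addKn !mulnDl; lia.
have mono : forall r r' : 'I_Mt, (r < r')%N -> (hi r' <= lo r)%N.
  move=> r r' rr'; case: (loP r) => /andP[loS /eqP loe] _.
  case: (hiP r') => /andP[hiS /eqP hie] _.
  rewrite leqNgt; apply/negP => lt.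
  have h1 := (amP r').2 _ loS.
  have h2 := (amP r).2 _ hiS.
  have e1 := slope r r' (lo r) rr'; have e2 := slope r r' (hi r') rr'.
  have : ((r' - r) * nu.+1 * (lo r).+1 < (r' - r) * nu.+1 * (hi r').+1)%N.
    by rewrite ltn_pmul2l ?muln_gt0 ?subn_gt0 ?rr'.
  move: e1 e2; set X := ((r' - r) * nu.+1 * (lo r).+1)%N.
  set Y := ((r' - r) * nu.+1 * (hi r').+1)%N.
  lia.
have sep : forall r r' : 'I_Mt, (r < r')%N -> (a r (am r) + nu < a r' (am r'))%N.
  move=> r r' rr'.
  have h := (amP r).2 _ (amP r').1.
  have e := slope r r' (am r') rr'.
  have : (1 * nu.+1 * 1 <= (r' - r) * nu.+1 * (am r').+1)%N.
    by apply: leq_mul => //; apply: leq_mul => //; rewrite subn_gt0.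
  move: e; set X := ((r' - r) * nu.+1 * (am r').+1)%N.
  lia.
have bound : forall r, (a r (am r) + nu < T)%N.
  move=> r; have := ee_le r (am r); have := vK _ (amP r).1.
  rewrite /a; move: HK; set E := (Mt.-1 * nu.+1 * R)%N; lia.
have Dzero : forall r (c : 'I_T), (c < a r (am r))%N -> enc U r c = 0.
  move=> r c hc; rewrite mxE; apply: big1 => k _; case: ifP => // h.
  case kS: (k \in S); last by rewrite cfS ?kS.
  apply: (hv k).1; have := (amP r).2 _ kS; move: hc h; rewrite /a; lia.
have Dnz : forall r (c : 'I_T), lo r = hi r -> (c : nat) = a r (am r) ->
    enc U r c != 0.
  move=> r c lh hc; rewrite mxE (bigD1 (lo r)) //= big1 ?addr0.
    case: (loP r) => /andP[loS /eqP loe] _.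
    have -> : (ee r (lo r) <= c)%N by move: loe; rewrite hc /a; lia.
    have -> : (c - ee r (lo r))%N = vv (lo r) by move: loe; rewrite hc /a; lia.
    exact: (hv _).2.
  move=> k nk; case: ifP => // h.
  case kS: (k \in S); last by rewrite cfS ?kS.
  apply: (hv k).1.
  have hk := (amP r).2 _ kS.
  have : a r k != a r (am r).
    apply/negP => /eqP e.
    have Mk : Ms r k by rewrite /Ms kS e eqxx.
    have := (loP r).2 _ Mk; have := (hiP r).2 _ Mk; rewrite -lh => h1 h2.
    have ek : k = lo r by apply: val_inj; apply/eqP; rewrite eqn_leq h1 h2.
    by rewrite ek eqxx in nk.
  move: hk h; rewrite hc /a => hk h /eqP ne; lia.
pose G := [set r : 'I_Mt | lo r == hi r].
have badhi : forall r, r \in ~: G -> (lo r < hi r)%N.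
  move=> r; rewrite !inE => nb; rewrite ltn_neqAle (loP r).2 ?(hiP r).1 // andbT.
  by move: nb; apply: contra => /eqP e; apply/eqP/val_inj.
have hiinj : {in ~: G &, injective hi}.
  move=> r r' rb r'b e.
  case: (ltngtP r r') => [lt|lt|/val_inj //].
    by have := mono _ _ lt; have := badhi _ rb; rewrite e; lia.
  by have := mono _ _ lt; have := badhi _ r'b; rewrite e; lia.
pose z : 'I_R := Ordinal R1.
have cbad : (#|~: G| <= R.-1)%N.
  rewrite -(card_in_imset hiinj).
  have -> : R.-1 = #|[set~ z]| by rewrite cardsC1 card_ord.
  apply: subset_leq_card; apply/subsetP => k /imsetP[r rb ->]; rewrite !inE.
  by apply/negP => /eqP e; have := badhi _ rb; rewrite e.
have cG : ((Mt - R.-1) <= #|G|)%N.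
  have := cardsC G; rewrite card_ord; lia.
pose I := ('I_nu.+1 * {r : 'I_Mt | r \in G})%type.
have cI : #|{: I}| = (nu.+1 * #|G|)%N.
  by rewrite card_prod card_ord card_sig cardsE.
have bnd : forall (r : 'I_Mt) (i : 'I_nu.+1), (a r (am r) + i < T)%N.
  by move=> r i; have := bound r; have := ltn_ord i; lia.
pose g := fun p : I => @tagnat.Rank nu.+1 (fun _ => Mt) p.1 (val p.2).
pose w := fun p : I => Ordinal (bnd (val p.2) p.1).
have winj : injective w.
  move=> [i [r rG]] [i' [r' rG']] /(congr1 val) /= e.
  have := ltn_ord i; have := ltn_ord i'.
  case: (ltngtP r r') => [lt|lt|eqr].
  - by have := sep _ _ lt; lia.
  - by have := sep _ _ lt; lia.
  have err : r = r' by apply: val_inj.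
  subst r'; have -> : i = i' by apply: val_inj => /=; lia.
  by rewrite (bool_irrelevance rG rG').
apply: leq_trans (rank_lb (g := g) winj _ _).
  by rewrite cI mulnC; apply: leq_mul.
- move=> [i r]; rewrite /g /w /= ThetaE mxE /=.
  rewrite leq_addl; apply: Dnz.
    by have := valP r; rewrite inE => /eqP.
  by rewrite val_insubd /= addnK ifT // (leq_ltn_trans _ (bnd (val r) i)) // leq_addr.
- move=> [i r] c /= hc; rewrite /g ThetaE mxE /=.
  case: ifP => // ic; apply: Dzero.
  by rewrite val_insubd ifT; [lia | have := ltn_ord c; lia].
Qed.


End Code.
Lemma fin (Mt nu T R : nat) : (1 <= Mt)%N -> (1 <= R)%N ->
  R%:Z * (T%:Z - nu%:Z - (nu.+1)%:Z * (Mt%:Z - 1) * ((2 ^ R)%:Z - 1) * (2 ^ R.-1)%:Z)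
      <= (R * (T - nu - Mt.-1 * nu.+1 * R))%N%:Z.
Proof.
move=> M1 R1.
have hX : (R < 2 ^ R)%N by apply: ltn_expl.
have hY : (1 <= 2 ^ R.-1)%N by rewrite expn_gt0.
move: hX hY; set X := (2 ^ R)%N; set Y := (2 ^ R.-1)%N => hX hY.
have hL : ((nu.+1 * Mt.-1 * R) <= nu.+1 * Mt.-1 * (X - 1) * Y)%N.
  rewrite -[X in (X <= _)%N]muln1; apply: leq_mul => //; apply: leq_mul => //; lia.
have -> : (nu.+1)%:Z * (Mt%:Z - 1) * (X%:Z - 1) * Y%:Z = (nu.+1 * Mt.-1 * (X - 1) * Y)%N%:Z.
  rewrite !PoszM; congr (_ * _ * _ * _); lia.
move: hL; set L := (nu.+1 * Mt.-1 * (X - 1) * Y)%N => hL.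
rewrite PoszM; apply: ler_wpM2l => //.
have : (Mt.-1 * nu.+1 * R = nu.+1 * Mt.-1 * R)%N by rewrite (mulnC Mt.-1).
move: hL; set E := (nu.+1 * Mt.-1 * R)%N; set E' := (Mt.-1 * nu.+1 * R)%N. lia.
Qed.

Theorem lemma3 (Mt nu d T : nat) :
  (1 <= Mt)%N -> (1 <= d)%N -> (d <= Mt)%N ->
  let R := (Mt - d + 1)%N in
  let q : int := (2 ^ R)%:Z - 1 in
  q * nu%:Z + q * (nu.+1)%:Z * ((Mt%:Z - 2) * q + R%:Z) <= T%:Z ->
  exists P : {set 'M['F_2]_(Mt, T)},
    (forall B, B \in P -> last_cols_zero nu B) /\
    (forall A B, A \in P -> B \in P -> A != B ->
       (d * nu.+1 <= \rank (Theta nu A - Theta nu B)%R)%N) /\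
    (0 < #|P|)%N /\
    R%:Z * (T%:Z - nu%:Z - (nu.+1)%:Z * (Mt%:Z - 1) * q * (2 ^ R.-1)%:Z)
      <= (trunc_log 2 #|P|)%:Z.
Proof.
move=> Mt1 d1 dMt R q _.
have R1 : (1 <= R)%N by rewrite /R addn1.
have Rd : (Mt - R.-1 = d)%N by rewrite /R addn1 /=; lia.
pose K := (T - nu - Mt.-1 * nu.+1 * R)%N.
have HK : K = (T - nu - Mt.-1 * nu.+1 * R)%N by [].
pose E := @enc Mt nu T R K.
have Einj : injective E.
  move=> U V e; apply/eqP; rewrite -subr_eq0; apply: contraT => nz.
  have := main HK nz R1; rewrite encB -/E e subrr.
  rewrite -(subrr (E V)) -ThetaB subrr mxrank0 Rd leqn0 muln_eq0 /=.
  by case: (d) d1.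
exists (E @: setT); split.
  by move=> B /imsetP[U _ ->]; exact: enc_last.
split.
  move=> A B /imsetP[U _ ->] /imsetP[V _ ->] ne.
  rewrite ThetaB -encB -Rd; apply: main => //.
  by rewrite subr_eq0; apply: contraNneq ne => ->.
rewrite card_imset // cardsT card_mx card_Fp //.
split; first by rewrite expn_gt0.
rewrite trunc_expnK //.
exact: fin.
Qed.
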